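(* In the setting of the context, the set $\{g^*(z) : g \in G\}$ is a $k(Y)$-basis of $k(X)$.
   Context: Let $k$ be an algebraically closed field of characteristic $p>0$, $G$ a finite $p$-group acting faithfully on a smooth projective curve $X$ over $k$, $Y := X/G$, $\pi : X\to Y$ the quotient map. For $P\in X(k)$ let $G_{P,i}$ be the lower ramification groups, $G_P$ the stabilizer, $d'_P := \sum_{i\ge1}(\#G_{P,i}-1)$. Assume: (A) $G_P$ is normal in $G$ for all $P\in X(k)$; (B) $z \in k(X)$ satisfies $\mathrm{ord}_P(z) \ge -d'_P$ for all $P \in X(k)$ and $\mathrm{tr}_{k(X)/k(Y)}(z) \neq 0$. *)

(* Defs.v *)
From HB Require Import structures.
From mathcomp Require Import all_boot all_order all_algebra all_fingroup all_solvable.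
From mathcomp Require Import boolp.
Set Implicit Arguments. Unset Strict Implicit. Unset Printing Implicit Defensive.
Import Order.TTheory GRing.Theory Num.Theory.
Local Open Scope ring_scope.

(* K is the function field k(X) of a smooth projective curve over k,
   i.e. a finitely generated extension of transcendence degree 1:
   some x in K is transcendental over k and K is a finite-dimensional
   k(x)-vector space. k is embedded in K via iota. *)
Definition function_field_1 (k K : fieldType) (iota : {rmorphism k -> K}) : Prop :=
  exists x : K,
    (forall q : {poly k}, (map_poly iota q).[x] = 0 -> q = 0) /\
    exists (n : nat) (b : 'I_n -> K),
      forall y : K, exists num den : 'I_n -> {poly k},
        (forall i, (map_poly iota (den i)).[x] != 0) /\
        y = \sum_(i < n) ((map_poly iota (num i)).[x]
                           / (map_poly iota (den i)).[x]) * b i.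

(* Points P of X(k) = normalized discrete valuations ord_P : K^* ->> Z,
   trivial on k (value at 0 fixed to 0 as a junk value). *)
Definition is_place (k K : fieldType) (iota : {rmorphism k -> K}) (v : K -> int)
  : Prop :=
  [/\ v 0 = 0,
      forall x y, x != 0 -> y != 0 -> v (x * y) = v x + v y,
      forall x y, x != 0 -> y != 0 -> x + y != 0 ->
        Num.min (v x) (v y) <= v (x + y),
      forall c, c != 0 -> v (iota c) = 0 &
      exists t, v t = 1].

Definition faithful_k_action (k K : fieldType) (iota : {rmorphism k -> K})
  (gT : finGroupType) (G : {group gT}) (act : gT -> K -> K) : Prop :=
  (forall g, g \in G -> forall x y, act g (x + y) = act g x + act g y) /\
  (forall g, g \in G -> forall x y, act g (x * y) = act g x * act g y) /\
  (forall g, g \in G -> act g 1 = 1) /\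
  (forall g, g \in G -> forall c, act g (iota c) = iota c) /\
  (forall x, act 1%g x = x) /\
  (forall g h, g \in G -> h \in G -> forall x, act (g * h)%g x = act g (act h x)) /\
  (forall g, g \in G -> (forall x, act g x = x) -> g = 1%g).

Definition stab (K : fieldType) (gT : finGroupType) (G : {group gT})
  (act : gT -> K -> K) (v : K -> int) : {set gT} :=
  [set g in G | `[< forall x, v (act g x) = v x >]].

(* lower ramification group G_{P,i}:
   g in G_P with ord_P(g^* t - t) >= i+1 for all t in O_P *)
Definition ram (K : fieldType) (gT : finGroupType) (G : {group gT})
  (act : gT -> K -> K) (v : K -> int) (i : nat) : {set gT} :=
  [set g in stab G act v | `[< forall t, 0 <= v t ->
       act g t - t = 0 \/ (i.+1)%:Z <= v (act g t - t) >]].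

Definition dprime_is (K : fieldType) (gT : finGroupType) (G : {group gT})
  (act : gT -> K -> K) (v : K -> int) (d : nat) : Prop :=
  exists N : nat, (forall i, (N <= i)%N -> #|ram G act v i| = 1%N) /\
    d = (\sum_(1 <= i < N) (#|ram G act v i| - 1))%N.

(* k(Y) = K^G *)
Definition fixed_field (K : fieldType) (gT : finGroupType) (G : {group gT})
  (act : gT -> K -> K) (y : K) : Prop :=
  forall g, g \in G -> act g y = y.

(* Main.v *)
Require Import Defs.
From HB Require Import structures.
From mathcomp Require Import all_boot all_order all_algebra all_fingroup all_solvable.
From mathcomp Require Import boolp.
Import Order.TTheory GRing.Theory Num.Theory.
Set Implicit Arguments. Unset Strict Implicit. Unset Printing Implicit Defensive.
Local Open Scope ring_scope.

Section DopSec.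
Variables (K : fieldType) (gT : finGroupType).

Definition Dop (h : gT) (f : gT -> K) : gT -> K := fun x => f (h^-1 * x)%g - f x.

Lemma iterDop n h f x : iter n (Dop h) f x =
  \sum_(0 <= i < n.+1) ((-1) ^+ (n + i) *+ 'C(n, i)) * f ((h ^+ i)^-1 * x)%g.
Proof.
elim: n f x => [|n IH] f x.
  by rewrite big_nat1 /= expr0 mulr1n mul1r expg0 invg1 mul1g.
rewrite iterS {1}/Dop !IH.
rewrite (big_nat_recl (n.+1)) // (big_nat_recl n 0 (fun i => _ * f ((h ^+ i)^-1 * x)%g)) //.
have E : forall i, ((-1) ^+ (n.+1 + i.+1) : K) = (-1) ^+ (n + i).
  by move=> i; rewrite addSn addnS !exprS !mulN1r opprK.
under [X in _ = _ + X]eq_bigr => i _ do rewrite binS mulrnDr mulrDl E.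
rewrite big_split /= [X in _ = _ + (X + _)]big_nat_recr //= (@bin_small n n.+1) // mulr0n mul0r addr0.
have F : forall i, f ((h ^+ i)^-1 * (h^-1 * x))%g = f ((h ^+ i.+1)^-1 * x)%g.
  by move=> i; rewrite expgS invMg mulgA.
under eq_bigr => i _ do rewrite F.
rewrite opprD addrCA; congr (_ + _).
  by rewrite !bin0 !addn0 exprS mulN1r !mulr1n mulNr.
rewrite addrC -sumrN; congr (_ + _).
apply: eq_bigr => i _.
by rewrite addnS exprS mulN1r mulNrn mulNr opprK.
Qed.

Lemma m1p p : p \in [pchar K] -> (-1 : K) ^+ p = -1.
Proof. by move=> pK; have := pFrobenius_autN pK 1; rewrite !pFrobenius_autE expr1n. Qed.

Lemma iterDop_p p h f : p \in [pchar K] -> iter p (Dop h) f = Dop (h ^+ p) f.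
Proof.
move=> pK; have pp := pcharf_prime pK.
apply/funext => x; rewrite iterDop.
have [q Eq] : exists q, p = q.+1 by exists p.-1; rewrite prednK // prime_gt0.
rewrite big_nat_recr // {1}Eq big_nat_recl // big_nat_cond big1 => [|i /andP[/andP[_ lt] _]].
  rewrite /= /Dop addr0 bin0 binn !mulr1n addn0 exprD m1p // mulrNN mulr1 mul1r expg0 invg1 mul1g.
  by rewrite mulN1r addrC.
rewrite -mulr_natr.
have /eqP -> : ('C(p, i.+1))%:R == 0 :> K.
  by rewrite -(dvdn_pcharf pK); apply: prime_dvd_bin => //; by rewrite Eq /= ltnS.
by apply/eqP; rewrite !mulf_eq0 eqxx orbT.
Qed.

Lemma iterDop_pn p h f n : p \in [pchar K] -> iter (p ^ n) (Dop h) f = Dop (h ^+ (p ^ n)) f.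
Proof.
move=> pK; elim: n h f => [|n IH] h f.
  by rewrite expn0 /= expg1.
apply/funext => x; rewrite expnS mulnC iterM.
have -> : iter (p ^ n) (iter p (Dop h)) f = iter (p ^ n) (Dop (h ^+ p)) f.
  by congr iter; apply/funext => g; rewrite iterDop_p.
by rewrite IH -expgM mulnC.
Qed.
End DopSec.


Lemma last_nonzero (Q : nat -> Prop) N : Q 0%N -> ~ Q N -> exists j, Q j /\ ~ Q j.+1.
Proof.
elim: N => [//|N IH] Q0 QN.
case: (pselect (Q N)) => [QN'|nQN]; first by exists N.
exact: IH.
Qed.

Section Main.
Variables (K : fieldType) (gT : finGroupType) (G : {group gT}) (act : gT -> K -> K) (z : K) (p : nat).
Hypothesis actD : forall g, g \in G -> forall x y, act g (x + y) = act g x + act g y.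
Hypothesis actM : forall g, g \in G -> forall x y, act g (x * y) = act g x * act g y.
Hypothesis act1 : forall x, act 1%g x = x.
Hypothesis actMg : forall g h, g \in G -> h \in G -> forall x, act (g * h)%g x = act g (act h x).
Hypothesis pK : p \in [pchar K].
Hypothesis pG : (p.-group G)%g.
Hypothesis trz : \sum_(g in G) act g z != 0.

Lemma act0 g : g \in G -> act g 0 = 0.
Proof.
by move=> gG; apply: (addrI (act g 0)); rewrite -actD // !addr0.
Qed.

Lemma actN g x : g \in G -> act g (- x) = - act g x.
Proof. by move=> gG; apply/eqP; rewrite -addr_eq0 -actD // addNr act0. Qed.

Lemma actB g x y : g \in G -> act g (x - y) = act g x - act g y.
Proof. by move=> gG; rewrite actD // actN. Qed.

Lemma act_sum g (I : Type) (r : seq I) (P : pred I) (F : I -> K) : g \in G ->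
  act g (\sum_(i <- r | P i) F i) = \sum_(i <- r | P i) act g (F i).
Proof. by move=> gG; apply: (big_morph (act g) (actD gG) (act0 gG)). Qed.

Definition fixed y := forall g, g \in G -> act g y = y.

Lemma sum_mulgl (F : gT -> K) g : g \in G -> \sum_(x in G) F (g * x)%g = \sum_(x in G) F x.
Proof.
move=> gG; symmetry; rewrite (reindex (mulg g)) /=.
  by apply: eq_bigl => x; rewrite groupMl.
by apply: onW_bij; exists (mulg g^-1) => x; [exact: mulKg | exact: mulKVg].
Qed.

Lemma tr_fixed w : fixed (\sum_(s in G) act s w).
Proof.
move=> t tG; rewrite act_sum //.
under eq_bigr => s sG do rewrite -actMg //.
exact: (sum_mulgl (fun s => act s w)).
Qed.

Definition inW (f : gT -> K) := [/\ forall x, x \notin G -> f x = 0,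
  forall x, x \in G -> fixed (f x) & \sum_(x in G) f x * act x z = 0].

Lemma inW_T h f : h \in G -> inW f -> inW (fun x => f (h^-1 * x)%g).
Proof.
move=> hG [f0 ffix fsum]; split.
- by move=> x xG; apply: f0; rewrite groupMl ?groupV.
- by move=> x xG; apply: ffix; rewrite groupMl ?groupV.
rewrite -(sum_mulgl (fun x => f (h^-1 * x)%g * act x z) hG).
under eq_bigr => x xG do rewrite mulKg actMg // -{1}(ffix _ xG _ hG) -actM //.
by rewrite -act_sum // fsum act0.
Qed.

Lemma inW_D h f : h \in G -> inW f -> inW (Dop h f).
Proof.
move=> hG Wf; have [f0 ffix fsum] := Wf; have [g0 gfix gsum] := inW_T hG Wf.
rewrite /Dop; split.
- by move=> x xG; rewrite g0 // f0 // subrr.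
- by move=> x xG t tG; rewrite actB // gfix // ffix.
under eq_bigr => x _ do rewrite mulrBl.
by rewrite sumrB gsum fsum subrr.
Qed.

Lemma iter_inW n h f : h \in G -> inW f -> inW (iter n (Dop h) f).
Proof. by move=> hG Wf; elim: n => [//|n IH]; rewrite iterS; apply: inW_D. Qed.

Definition fixM (M : {set gT}) (f : gT -> K) :=
  forall m, m \in M -> forall x, f (m^-1 * x)%g = f x.

Lemma fixM_D (M : {set gT}) g f : (forall m, m \in M -> (m ^ g)%g \in M) ->
  fixM M f -> fixM M (Dop g f).
Proof.
move=> nM fM m mM x; rewrite /Dop (fM m mM x).
have -> : (g^-1 * (m^-1 * x) = (m ^ g)^-1 * (g^-1 * x))%g.
  by rewrite -conjVg conjgE -!mulgA mulKVg.
by rewrite fM // nM.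
Qed.

Lemma iter_fixM (M : {set gT}) g f n : (forall m, m \in M -> (m ^ g)%g \in M) ->
  fixM M f -> fixM M (iter n (Dop g) f).
Proof. by move=> nM fM; elim: n => [//|n IH]; rewrite iterS; apply: fixM_D. Qed.

Lemma fixed_exists n : forall (H : {group gT}), (#|H| < n)%N -> H \subset G ->
  forall f, inW f -> f <> (fun=> 0) ->
  exists f', [/\ inW f', f' <> (fun=> 0) & fixM H f'].
Proof.
elim: n => [//|n IH] H Hn sHG f Wf nf.
have [H1|[M maxM _]] := maximal_exists (sub1G H).
  exists f; split=> // m; rewrite -H1 => /set1gP -> x.
  by rewrite invg1 mul1g.
have pH := pgroupS sHG pG.
have /andP[_ nMH] := p_maximal_normal pH maxM.
have prM := maxgroupp maxM.
have sMH := proper_sub prM.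
have [f1 [Wf1 nf1 fM1]] : exists f', [/\ inW f', f' <> (fun=> 0) & fixM M f'].
  apply: (IH M _ (subset_trans sMH sHG) f Wf nf).
  by rewrite -ltnS; apply: leq_trans Hn; rewrite ltnS proper_card.
have [_ [g gH gM]] := properP prM.
have gG : g \in G by apply: (subsetP sHG).
have nMg : forall m, m \in M -> (m ^ g)%g \in M.
  by move=> m mM; rewrite memJ_norm // (subsetP nMH).
have [a Ea] := p_natP (mem_p_elt pG gG).
have [j [Qj nQj]] : exists j, iter j (Dop g) f1 <> (fun=> 0) /\
   ~ iter j.+1 (Dop g) f1 <> (fun=> 0).
  apply: (last_nonzero (N := (p ^ a)%N)) => //.
  rewrite iterDop_pn // -Ea expg_order => []; apply.
  by apply/funext => x; rewrite /Dop invg1 mul1g subrr.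
set u := iter j (Dop g) f1.
have Wu : inW u by apply: iter_inW.
have Mu : fixM M u by apply: iter_fixM.
have gu : forall x, u (g^-1 * x)%g = u x.
  have E : Dop g u = (fun=> 0).
    by case: (pselect (Dop g u = (fun=> 0))) => // ne; exfalso; apply: nQj; rewrite iterS.
  by move=> x; have := congr1 (fun f => f x) E; rewrite /Dop => /eqP; rewrite subr_eq0 => /eqP.
pose S := [set h | [forall x, u (h^-1 * x)%g == u x]].
have gS : group_set S.
  apply/group_setP; split.
    by rewrite inE; apply/forallP => x; rewrite invg1 mul1g.
  move=> h1 h2; rewrite !inE => /forallP h1S /forallP h2S; apply/forallP => x.
  by rewrite invMg -mulgA (eqP (h2S _)) (eqP (h1S _)).
pose Sg := Group gS.
have sLS : <<M :|: [set g]>>%g \subset Sg.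
  rewrite gen_subG subUset sub1set; apply/andP; split.
    by apply/subsetP => m mM; rewrite inE; apply/forallP => x; rewrite Mu.
  by rewrite inE; apply/forallP => x; rewrite gu.
pose L := (<<M :|: [set g]>>)%G.
have sLH : L \subset H by rewrite gen_subG subUset sub1set sMH gH.
have sML : M \subset L := subset_trans (subsetUl M [set g]) (subset_gen _).
have gL : g \in L by apply: mem_gen; rewrite !inE eqxx orbT.
have eLH : L :=: H.
  case: (boolP (L \proper H)) => [prL|].
    have eLM := (maxgroupP maxM).2 L prL sML.
    by move: gL; rewrite eLM => gM'; rewrite gM' in gM.
  by rewrite properEneq sLH andbT negbK => /eqP.
exists u; split=> // m mH x.
have mL : m \in L by rewrite eLH.
have : m \in S by apply: (subsetP sLS).
by rewrite inE => /forallP/(_ x)/eqP.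
Qed.

Lemma indep (c : gT -> K) : (forall g, g \in G -> fixed (c g)) ->
  \sum_(g in G) c g * act g z = 0 -> forall g, g \in G -> c g = 0.
Proof.
move=> cfix csum g0 g0G; apply/eqP; apply/negPn/negP => cg0.
pose f := fun x => if x \in G then c x else 0.
have Wf : inW f.
  split.
  - by move=> x /negbTE xG; rewrite /f xG.
  - by move=> x xG; rewrite /f xG; apply: cfix.
  - by rewrite -[RHS]csum; apply: eq_bigr => x xG; rewrite /f xG.
have nf : f <> (fun=> 0).
  by move=> E; have := congr1 (fun h => h g0) E; rewrite /f g0G => /eqP; rewrite (negbTE cg0).
have [f' [Wf' nf' fG']] := fixed_exists (ltnSn #|G|) (subxx G) Wf nf.
have [f0 _ fsum] := Wf'.
have E : forall x, f' x = if x \in G then f' 1%g else 0.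
  move=> x; case: ifP => xG; last by apply: f0; rewrite xG.
  by rewrite -(fG' x xG x) mulVg.
have : f' 1%g * \sum_(x in G) act x z = 0.
  by rewrite mulr_sumr -[RHS]fsum; apply: eq_bigr => x xG; rewrite (E x) xG.
move/eqP; rewrite mulf_eq0 (negbTE trz) orbF => /eqP f1.
by apply: nf'; apply/funext => x; rewrite E f1; case: ifP.
Qed.

Lemma span (y : K) : exists c : gT -> K,
  (forall g, g \in G -> fixed (c g)) /\ y = \sum_(g in G) c g * act g z.
Proof.
have G1 : (1%g \in G) := group1 G.
pose e := fun i : 'I_#|G| => (enum_val i : gT).
have eG : forall i, e i \in G by move=> i; apply: enum_valP.
pose M : 'M[K]_#|G| := \matrix_(i, j) act (e j * e i)%g z.
have Mcol : forall (v : 'rV[K]_#|G|) s, s \in G ->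
    (v *m M) 0 (enum_rank_in G1 s) = \sum_i v 0 i * act (s * e i)%g z.
  move=> v s sG; rewrite mxE; apply: eq_bigr => i _.
  by rewrite mxE /e enum_rankK_in.
have detM : \det M != 0.
  apply/negP => /det0P [v nv vM].
  have [i0 vi0] : exists i0, v 0 i0 != 0.
    case: (pselect (exists i0, v 0 i0 != 0)) => // H; exfalso.
    move/negP: nv; apply; apply/eqP/rowP => i; rewrite !mxE.
    by apply/eqP; apply/negPn/negP => ne; apply: H; exists i.
  pose a := z / v 0 i0.
  pose d := fun g => if g \in G then \sum_(s in G) act s (a * v 0 (enum_rank_in G1 g)) else 0.
  have := @indep d _ _ (e i0) (eG i0).
  rewrite /d eG enum_valK_in /a divfK //.
  move=> H; move: trz; rewrite H ?eqxx //.
  - by move=> g gG; rewrite /d gG; apply: tr_fixed.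
  rewrite big_enum_val /=.
  under eq_bigr => i _ do rewrite /d enum_valP enum_valK_in mulr_suml.
  rewrite exchange_big /=; apply: big1 => s sG.
  under eq_bigr => i _ do rewrite -[X in act X z](mulKVg s (enum_val i)) actMg ?groupMl ?groupV ?enum_valP // -actM //.
  rewrite -act_sum //.
  under eq_bigr => i _ do rewrite -mulrA.
  rewrite -mulr_sumr.
  have := Mcol v s^-1%g (groupVr sG); rewrite vM mxE => <-.
  by rewrite mulr0 act0.
have uM : M \in unitmx by rewrite unitmxE unitfE.
pose r : 'rV[K]_#|G| := \row_j act (e j) y.
pose c := r *m invmx M.
have cM : c *m M = r := mulmxKV uM r.
have cfix : forall i, fixed (c 0 i).
  move=> i s sG.
  pose c' : 'rV[K]_#|G| := \row_i act s (c 0 i).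
  have cM2 : c' *m M = r.
    apply/rowP => j; rewrite mxE.
    have ejG := eG j.
    have sjG : (s^-1 * e j)%g \in G by rewrite groupMl ?groupV.
    have Hj : r 0 (enum_rank_in G1 (s^-1 * e j)%g) =
        \sum_i c 0 i * act ((s^-1 * e j) * e i)%g z by rewrite -cM Mcol.
    rewrite mxE /e enum_rankK_in // in Hj.
    rewrite ?mxE -[X in _ = act X y](mulKVg s) actMg // Hj act_sum //.
    apply: eq_bigr => k _; rewrite ?mxE actM // -actMg ?groupM ?groupV ?eG //.
    by rewrite mulgA mulKVg.
  have : c' = c by rewrite -[c'](mulmxK uM) cM2.
  by move/rowP/(_ i); rewrite mxE.
exists (fun g => c 0 (enum_rank_in G1 g)); split.
  by move=> g _; apply: cfix.
rewrite big_enum_val /=.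
under eq_bigr => i _ do rewrite enum_valK_in.
have := Mcol c _ G1; rewrite cM mxE /e enum_rankK_in // act1 => ->.
by apply: eq_bigr => i _; rewrite mul1g.
Qed.
End Main.

Theorem proposition3p1 (p : nat) (k : closedFieldType) (K : fieldType)
  (iota : {rmorphism k -> K}) (gT : finGroupType) (G : {group gT})
  (act : gT -> K -> K) (z : K) :
  p \in [pchar k] ->
  function_field_1 iota ->
  faithful_k_action iota G act ->
  (p.-group G)%g ->
  (forall v, is_place iota v -> (stab G act v <| G)%g) ->
  (forall v, is_place iota v ->
     forall d, dprime_is G act v d -> - (d%:Z) <= v z) ->
  \sum_(g in G) act g z != 0 ->
  (forall c : gT -> K, (forall g, g \in G -> fixed_field G act (c g)) ->
     \sum_(g in G) c g * act g z = 0 -> forall g, g \in G -> c g = 0) /\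
  (forall y : K, exists c : gT -> K,
     (forall g, g \in G -> fixed_field G act (c g)) /\
     y = \sum_(g in G) c g * act g z).
Proof.
move=> pk _ [aD [aM [_ [_ [a1 [aMg _]]]]]] pG _ _ trz.
have pK : p \in [pchar K] := rmorph_pchar iota pk.
split.
  move=> c cfix csum g gG.
  exact: (indep aD aM aMg pK pG trz cfix csum gG).
move=> y.
exact: (span aD aM a1 aMg pK pG trz y).
Qed.
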